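(* Fix a constant $c\in[0,1)$. Consider the family of instances indexed by $N\ge 2$ and a marked element $i^*\in[N]$: $A=E=\mathbb{C}^N$, $B=E'=\mathbb{C}^2$, $\sigma_A=I/N$, $f(i)=1$ iff $i=i^*$ (else $0$), and $U^{\mathcal{N}}_{E'A\to EB}|b\rangle_{E'}|i\rangle_A=|i\rangle_E|b\oplus f(i)\rangle_B$, so that $V^{\mathcal{N}}=U^{\mathcal{N}}|0\rangle_{E'}$ is an isometric extension of the channel $\mathcal{N}(\rho)=\sum_i\langle i|\rho|i\rangle|f(i)\rangle\langle f(i)|$; here $d_E=N$ and $\mathcal{N}(\sigma_A)$ has smallest eigenvalue $1/N$, so $\kappa_{\mathcal{N}(\sigma)}=N$. Any quantum algorithm that, given black-box access to $U^{\mathcal{N}}$ (and its inverse) for an unknown $i^*$, implements a channel $\tilde{\mathcal{P}}_{B\to A}$ with $\|\tilde{\mathcal{P}}-\mathcal{P}^{\sigma,\mathcal{N}}_{B\to A}\|_\diamond\le c$ for every such instance must use $U^{\mathcal{N}}$ at least $\Omega(\sqrt N)$ times in the worst case. Equivalently, for every $\alpha\in[0,\tfrac12]$ the number of uses is $\Omega\big(d_E^{1/2-\alpha}\kappa_{\mathcal{N}(\sigma)}^{\alpha}\big)$.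
   Context: The Petz recovery channel of $\sigma_A$ and $\mathcal{N}_{A\to B}$ is $\mathcal{P}^{\sigma,\mathcal{N}}_{B\to A}(\omega_B):=\sigma_A^{1/2}\,\mathcal{N}^\dagger\!\big(\mathcal{N}(\sigma_A)^{-1/2}\,\omega_B\,\mathcal{N}(\sigma_A)^{-1/2}\big)\,\sigma_A^{1/2}$, where $\mathcal{N}^\dagger$ is the Hilbert–Schmidt adjoint of $\mathcal{N}$. $\|\cdot\|_\diamond$ is the diamond norm. Each use of $U^{\mathcal{N}}$ or its inverse corresponds to one query to the standard search oracle $|i\rangle|b\rangle\mapsto|i\rangle|b\oplus f(i)\rangle$. *)

(* Defs.v *)
From mathcomp Require Import all_boot all_algebra.
From mathcomp Require Import reals.
From mathcomp.real_closed Require Import complex.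
From Stdlib Require Import ClassicalEpsilon.
Import GRing.Theory Num.Theory.

Set Implicit Arguments.
Unset Strict Implicit.
Unset Printing Implicit Defensive.

Local Open Scope ring_scope.

Section LinAlg.
Variable R : realType.
Local Notation C := (R[i]).

(* Linear operators from C^J to C^I, as I x J matrices indexed by finite types
   (rows I = output system, columns J = input system). *)
Definition op (I J : finType) := I -> J -> C.

Definition mulop (I J K : finType) (A : op I J) (B : op J K) : op I K :=
  fun i k => \sum_j A i j * B j k.
Definition adjop (I J : finType) (A : op I J) : op J I :=
  fun j i => (A i j)^*.
Definition idop (I : finType) : op I I := fun i j => (i == j)%:R.
Definition trop (I : finType) (A : op I I) : C := \sum_i A i i.
Definition tensop (I J K L : finType) (A : op I J) (B : op K L) : op (I * K)%type (J * L)%type :=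
  fun p q => A p.1 q.1 * B p.2 q.2.
Definition ptr1 (K I : finType) (X : op (K * I)%type (K * I)%type) : op I I :=
  fun i i' => \sum_k X (k, i) (k, i').
Definition ptr2 (I K : finType) (X : op (I * K)%type (I * K)%type) : op I I :=
  fun i i' => \sum_k X (i, k) (i', k).

Definition isometry (I J : finType) (V : op I J) := mulop (adjop V) V = @idop J.
Definition unitary (I : finType) (U : op I I) :=
  mulop (adjop U) U = @idop I /\ mulop U (adjop U) = @idop I.

Definition psd (I : finType) (X : op I I) :=
  (forall i j, X i j = (X j i)^*) /\
  (forall v : I -> C, 0 <= \sum_i \sum_j (v i)^* * X i j * v j).

Definition op0 (I J : finType) : op I J := fun _ _ => 0.

Definition msqrt (I : finType) (X : op I I) : op I I :=
  epsilon (inhabits (@op0 I I)) (fun S => psd S /\ mulop S S = X).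
Definition minv (I : finType) (X : op I I) : op I I :=
  epsilon (inhabits (@op0 I I))
          (fun Y => mulop X Y = @idop I /\ mulop Y X = @idop I).

Definition tracenorm (I J : finType) (X : op I J) : C :=
  trop (msqrt (mulop (adjop X) X)).

Definition supop (I J : finType) := op I I -> op J J.

Definition tensid (I J : finType) (Phi : supop I J) (K : finType) :
  supop (I * K)%type (J * K)%type :=
  fun X p q => Phi (fun i i' => X (i, p.2) (i', q.2)) p.1 q.1.

(* ||Phi||_diamond <= c, with ||Phi||_diamond =
   sup_K sup_{||X||_1 <= 1} ||(Phi (x) id_K)(X)||_1. *)
Definition diamond_le (I J : finType) (Phi : supop I J) (c : R) :=
  forall (K : finType) (X : op (I * K)%type (I * K)%type),
    tracenorm X <= 1 -> tracenorm (@tensid I J Phi K X) <= (c%:C)%C.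

(* Petz recovery channel of sigma_A and N_{A->B}; Nadj = Hilbert-Schmidt adjoint. *)
Definition petz (A B : finType) (sigma : op A A) (Nch : supop A B) (Nadj : supop B A)
  : supop B A :=
  fun omega =>
    let s := msqrt sigma in
    let n := minv (msqrt (Nch sigma)) in
    mulop s (mulop (Nadj (mulop n (mulop omega n))) s).

Variable N : nat.

(* f(i) = 1 iff i = i* ; bool encodes C^2 with false = |0>, true = |1>. *)
Definition fsearch (istar : 'I_N) (i : 'I_N) : bool := i == istar.

(* U^N_{E'A -> EB} |b>_{E'} |i>_A = |i>_E |b xor f(i)>_B,
   E' = B = bool, A = E = 'I_N. *)
Definition Uorc (istar : 'I_N) : op ('I_N * bool)%type (bool * 'I_N)%type :=
  fun p q => ((p.1 == q.2) && (p.2 == addb q.1 (fsearch istar q.2)))%:R.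

Definition Viso (istar : 'I_N) : op ('I_N * bool)%type 'I_N :=
  fun p i => Uorc istar p (false, i).

Definition chanN (istar : 'I_N) : supop 'I_N bool :=
  fun rho => ptr1 (mulop (Viso istar) (mulop rho (adjop (Viso istar)))).
Definition chanNadj (istar : 'I_N) : supop bool 'I_N :=
  fun Y => mulop (adjop (Viso istar)) (mulop (tensop (@idop 'I_N) Y) (Viso istar)).

Definition sigmaA : op 'I_N 'I_N := fun i j => (i == j)%:R / N%:R.

Definition petzN (istar : 'I_N) : supop bool 'I_N :=
  petz sigmaA (chanN istar) (chanNadj istar).

(* Working space S = (E' * A) * W, with W an arbitrary finite workspace.
   The oracle acts on the E'A (= 2N-dimensional) register; after a forward use
   of U the register E B is re-identified with E' A by the fixed swap
   |i>_E |b>_B |-> |b>_{E'} |i>_A (a fixed, oracle-independent unitary). *)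
Definition swapop : op (bool * 'I_N)%type ('I_N * bool)%type :=
  fun p q => ((p.1 == q.2) && (p.2 == q.1))%:R.

(* inv = false : use U ; inv = true : use U^{-1} = U^dagger *)
Definition query (istar : 'I_N) (inv : bool) : op (bool * 'I_N)%type (bool * 'I_N)%type :=
  if inv then mulop (adjop (Uorc istar)) (adjop swapop)
  else mulop swapop (Uorc istar).

Unset Implicit Arguments.
Record qalg := QAlg {
  qW : finType;
  qOut : finType;        (* discarded register at the end *)
  qT : nat;              (* number of uses of U or U^{-1} *)
  qinv : nat -> bool;    (* whether the k-th use is U^{-1} *)
  qVin : op ((bool * 'I_N) * qW)%type bool;   (* input isometry from B (ancillas + unitary) *)
  qVmid : nat -> op ((bool * 'I_N) * qW)%type ((bool * 'I_N) * qW)%type; (* unitaries after each query *)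
  qVout : op ('I_N * qOut)%type ((bool * 'I_N) * qW)%type  (* final isometry onto A (x) Out *)
}.

Definition qalg_valid (Q : qalg) :=
  isometry (qVin Q) /\ (forall k, (k < qT Q)%N -> unitary (qVmid Q k)) /\
  isometry (qVout Q).

Fixpoint qstate (Q : qalg) (istar : 'I_N) (k : nat) : op ((bool * 'I_N) * qW Q)%type bool :=
  match k with
  | 0 => qVin Q
  | k'.+1 => mulop (qVmid Q k')
               (mulop (tensop (query istar (qinv Q k')) (@idop (qW Q)))
                      (qstate Q istar k'))
  end.

Definition qchannel (Q : qalg) (istar : 'I_N) : supop bool 'I_N :=
  fun rho =>
    let Wt := mulop (qVout Q) (qstate Q istar (qT Q)) in
    ptr2 (mulop Wt (mulop rho (adjop Wt))).

Definition supop_sub (I J : finType) (P1 P2 : supop I J) : supop I J :=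
  fun X i j => P1 X i j - P2 X i j.

End LinAlg.

Arguments qalg_valid {R N} Q.
Arguments qchannel {R N} Q istar _ _ _.
Arguments qstate {R N} Q istar k _ _.
Arguments qT {R N} q.
Arguments qW {R N} q.
Arguments qOut {R N} q.
Arguments qinv {R N} q _.
Arguments qVin {R N} q _ _.
Arguments qVmid {R N} q _ _ _.
Arguments qVout {R N} q _ _.
Arguments supop_sub {R I J} P1 P2 _ _ _.

(* Main.v *)
Require Import Defs.
From mathcomp Require Import all_boot all_algebra.
From mathcomp Require Import reals.
From mathcomp.real_closed Require Import complex.
From mathcomp Require Import sesquilinear spectral.
From mathcomp Require Import ring lra.
From Stdlib Require Import ClassicalEpsilon FunctionalExtensionality.
From mathcomp Require Import order.
Import Order.TTheory GRing.Theory Num.Theory.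
Local Open Scope ring_scope.

Set Implicit Arguments.
Unset Strict Implicit.

Section H.
Variable R : realType.
Local Notation C := (R[i]).

Lemma qsum_enum (I : finType) (F : I -> C) :
  \sum_(a : I) F a = \sum_(i < #|I|) F (enum_val i).
Proof.
rewrite (reindex (@enum_val I (pred_of_simpl predT))) //; exists enum_rank => x _; [exact: enum_valK | exact: enum_rankK].
Qed.

Lemma sum_dl (I : finType) (i : I) (F : I -> C) :
  \sum_j (i == j)%:R * F j = F i.
Proof.
rewrite (bigD1 i) //= eqxx mul1r big1 ?addr0 // => j /negbTE.
by rewrite eq_sym => ->; rewrite mul0r.
Qed.

Lemma sum_dr (I : finType) (i : I) (F : I -> C) :
  \sum_j F j * (i == j)%:R = F i.
Proof.
by rewrite -(sum_dl i); apply: eq_bigr => j _; rewrite mulrC.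
Qed.

Lemma psd_herm (I : finType) (X : op R I I) i j : psd X -> X i j = (X j i)^*.
Proof. by case=> h _; apply: h. Qed.

Lemma psd_form (I : finType) (X : op R I I) v :
  psd X -> 0 <= \sum_i \sum_j (v i)^* * X i j * v j.
Proof. by case=> _ h; apply: h. Qed.

End H.

Section H1b.
Variable R : realType.
Local Notation C := (R[i]).
Lemma sum_dl' (I : finType) (i : I) (F : I -> C) :
  \sum_j (j == i)%:R * F j = F i.
Proof. by rewrite -(sum_dl i); apply: eq_bigr => j _; rewrite eq_sym. Qed.
Lemma sum_dr' (I : finType) (i : I) (F : I -> C) :
  \sum_j F j * (j == i)%:R = F i.
Proof. by rewrite -(sum_dr i); apply: eq_bigr => j _; rewrite eq_sym. Qed.
End H1b.

Section H2sec.
Local Open Scope sesquilinear_scope.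


Section H.
Variable R : realType.
Local Notation C := (R[i]).

Lemma psd_sqrt_ex (I : finType) (X : op R I I) :
  psd X -> exists S, psd S /\ mulop S S = X.
Proof.
move=> hX.
pose A : 'M[C]_#|I| := \matrix_(i, j) X (enum_val i) (enum_val j).
have hA : A \is hermsymmx.
  apply/is_hermitianmxP; rewrite expr0 scale1r; apply/matrixP => i j.
  by rewrite !mxE; apply: psd_herm.
have /orthomx_spectralP eA := hermitian_normalmx hA.
set P := spectralmx A in eA; set d := spectral_diag A in eA.
have PU : P \is unitarymx by apply: spectral_unitarymx.
rewrite invmx_unitary // in eA.
have eD : diag_mx d = P *m A *m P^t*.
  by rewrite eA !mulmxA (unitarymxP PU) mul1mx mulmxtVK.
have dge0 k : 0 <= d 0 k.
  have := congr1 (fun M : 'M[C]_#|I| => M k k) eD; rewrite /= mxE eqxx mulr1n => ->.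
  have := psd_form (fun a => (P k (enum_rank a))^*) hX.
  rewrite qsum_enum; under eq_bigr => i _ do rewrite qsum_enum.
  move=> h; rewrite !mxE.
  under eq_bigr => j _ do (rewrite mxE mulr_suml; under eq_bigr => i _ do rewrite !mxE).
  rewrite exchange_big /=; apply: le_trans h _; rewrite le_eqVlt; apply/orP; left.
  apply/eqP; apply: eq_bigr => i _; apply: eq_bigr => j _.
  by rewrite !enum_valK conjCK.
pose s : 'rV[C]_#|I| := \row_k sqrtC (d 0 k).
pose B : 'M[C]_#|I| := P^t* *m diag_mx s *m P.
have eB : B *m B = A.
  rewrite /B !mulmxA mulmxtVK // -(mulmxA (P^t*) (diag_mx s)) mulmx_diag eA.
  congr (_ *m diag_mx _ *m _); apply/rowP => k; rewrite !mxE -expr2 sqrtCK.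
  by [].
have Bij i j : B i j = \sum_k (P k i)^* * s 0 k * P k j.
  rewrite /B mxE; apply: eq_bigr => k _; rewrite mul_mx_diag !mxE.
  by [].
exists (fun a b => B (enum_rank a) (enum_rank b)); split; last first.
  apply: functional_extensionality => a; apply: functional_extensionality => b; rewrite /mulop qsum_enum.
  have := congr1 (fun M : 'M[C]_#|I| => M (enum_rank a) (enum_rank b)) eB.
  rewrite /= !mxE !enum_rankK => <-.
  by apply: eq_bigr => k _; rewrite enum_valK.
have sr k : (s 0 k)^* = s 0 k by rewrite mxE geC0_conj // sqrtC_ge0.
split.
  move=> a b; rewrite !Bij rmorph_sum; apply: eq_bigr => k _.
  by rewrite !rmorphM /= conjCK sr; ring.
move=> v; rewrite qsum_enum; under eq_bigr => i _ do (rewrite qsum_enum;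
  under eq_bigr => j _ do rewrite !enum_valK Bij mulr_sumr mulr_suml).
pose w (i : 'I_#|I|) := v (enum_val i).
pose u k := \sum_j P k j * w j.
rewrite (_ : \sum_i _ = \sum_k s 0 k * ((u k)^* * u k)); last first.
  rewrite /u; under eq_bigr => i _ do rewrite exchange_big /=.
  rewrite exchange_big /=; apply: eq_bigr => k _.
  rewrite rmorph_sum mulr_suml mulr_sumr; apply: eq_bigr => i _.
  rewrite mulr_sumr mulr_sumr; apply: eq_bigr => j _.
  by rewrite rmorphM /= /w; ring.
apply: sumr_ge0 => k _; apply: mulr_ge0; first by rewrite mxE sqrtC_ge0.
by rewrite mulrC mul_conjC_ge0.
Qed.

End H.

End H2sec.

Section H.
Variable R : realType.
Local Notation C := (R[i]).

Lemma msqrt_spec (I : finType) (X : op R I I) :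
  psd X -> psd (msqrt X) /\ mulop (msqrt X) (msqrt X) = X.
Proof.
move=> hX; exact: (epsilon_spec (inhabits (@op0 R I I)) (fun S => psd S /\ mulop S S = X) (psd_sqrt_ex hX)).
Qed.

Lemma minv_spec (I : finType) (X Y : op R I I) :
  mulop X Y = @idop R I /\ mulop Y X = @idop R I ->
  mulop X (minv X) = @idop R I /\ mulop (minv X) X = @idop R I.
Proof.
move=> h; exact: (epsilon_spec (inhabits (@op0 R I I)) (fun Z => mulop X Z = @idop R I /\ mulop Z X = @idop R I) (ex_intro _ Y h)).
Qed.

Lemma psd_diag (I : finType) (X : op R I I) i : psd X -> 0 <= X i i.
Proof.
move=> hX; have := psd_form (fun k => (i == k)%:R) hX.
under eq_bigr => k _ do (rewrite rmorph_nat; under eq_bigr => j _ do rewrite -mulrA;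
  rewrite -mulr_sumr).
by rewrite sum_dl sum_dr.
Qed.

Lemma sum_d2 (I : finType) (i j : I) a b (F : I -> C) :
  \sum_l F l * (a * (i == l)%:R + b * (j == l)%:R) = F i * a + F j * b.
Proof.
under eq_bigr => l _ do rewrite mulrDr.
rewrite big_split /=; congr (_ + _).
  by rewrite -(sum_dl i (fun l => F l * a)); apply: eq_bigr => l _; ring.
by rewrite -(sum_dl j (fun l => F l * b)); apply: eq_bigr => l _; ring.
Qed.

Lemma psd_form2 (I : finType) (X : op R I I) i j a b : psd X ->
  0 <= a^* * (X i i * a + X i j * b) + b^* * (X j i * a + X j j * b).
Proof.
move=> hX; have := psd_form (fun k => a * (i == k)%:R + b * (j == k)%:R) hX.
under eq_bigr => k _ do (under eq_bigr => l _ do rewrite -mulrA;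
  rewrite -mulr_sumr sum_d2).
rewrite (eq_bigr (fun k => (X k i * a + X k j * b) * (a^* * (i == k)%:R + b^* * (j == k)%:R))).
  by rewrite sum_d2 mulrC (mulrC _ b^*).
by move=> k _; rewrite rmorphD !rmorphM /= !rmorph_nat mulrC.
Qed.

Lemma conj_nneg (x : C) : 0 <= x -> x^* = x.
Proof. exact: geC0_conj. Qed.

Lemma psd_minor (I : finType) (X : op R I I) i j : psd X ->
  X i j * X j i <= X i i * X j j.
Proof.
move=> hX; have [->|nij] := eqVneq i j; first by [].
have hx := psd_diag i hX; have hy := psd_diag j hX.
have eji : X j i = (X i j)^* by apply: psd_herm.
have hm : 0 <= X i j * X j i by rewrite eji mul_conjC_ge0.
set x := X i i in hx *; set y := X j j in hy *; set m := X i j * X j i in hm *.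
have [y0|ypos] := eqVneq y 0.
  rewrite y0 mulr0.
  have := psd_form2 i j m (- ((x + 1) * X j i)) hX.
  have cji : (X j i)^* = X i j by rewrite eji conjCK.
  have ct : (- ((x + 1) * X j i))^* = - ((x + 1) * X i j).
    by rewrite rmorphN rmorphM /= cji conj_nneg // addr_ge0.
  rewrite ct (conj_nneg hm) -/x -/y y0.
  have -> : m * (x * m + X i j * - ((x + 1) * X j i)) +
   - ((x + 1) * X i j) * (X j i * m + 0 * - ((x + 1) * X j i)) = - (m * m * (x + 2)).
    by rewrite /m; ring.
  rewrite oppr_ge0 => h.
  have hx2 : 0 < x + 2 by apply: (lt_le_trans (ltr0n _ 2)); rewrite lerDr.
  have : m * m <= 0 by rewrite -(pmulr_rle0 _ hx2) mulrC.
  move=> hmm; have : m * m == 0.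
    by rewrite eq_le hmm mulr_ge0.
  by rewrite mulf_eq0 orbb => /eqP ->.
have ypos' : 0 < y by rewrite lt_def ypos hy.
have := psd_form2 i j y (- X j i) hX.
have cji : (X j i)^* = X i j by rewrite eji conjCK.
rewrite rmorphN /= (conj_nneg hy) cji -/x -/y.
have -> : y * (x * y + X i j * - X j i) + - X i j * (X j i * y + y * - X j i) =
  y * (x * y - m) by rewrite /m; ring.
by rewrite pmulr_rge0 // subr_ge0.
Qed.

End H.

Section H.
Variable R : realType.
Local Notation C := (R[i]).

Lemma psd_adjmul (I J : finType) (Y : op R I J) : psd (mulop (adjop Y) Y).
Proof.
split.
  move=> i j; rewrite /mulop /adjop rmorph_sum; apply: eq_bigr => k _.
  by rewrite rmorphM /= conjCK mulrC.
move=> v; rewrite /mulop /adjop.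
rewrite (_ : \sum_i _ = \sum_k (\sum_j Y k j * v j)^* * (\sum_j Y k j * v j)); last first.
  under eq_bigr => i _ do (under eq_bigr => j _ do rewrite mulr_sumr mulr_suml;
     rewrite exchange_big /=).
  rewrite exchange_big /=; apply: eq_bigr => k _.
  rewrite rmorph_sum mulr_suml; apply: eq_bigr => i _.
  rewrite mulr_sumr; apply: eq_bigr => j _.
  by rewrite rmorphM /=; ring.
by apply: sumr_ge0 => k _; rewrite mulrC mul_conjC_ge0.
Qed.

Lemma trop_ge0 (I : finType) (S : op R I I) : psd S -> 0 <= trop S.
Proof. by move=> h; apply: sumr_ge0 => i _; apply: psd_diag. Qed.

Lemma diag_le_trop (I : finType) (S : op R I I) p : psd S -> S p p <= trop S.
Proof.
move=> h; rewrite /trop (bigD1 p) //= lerDl.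
by apply: sumr_ge0 => i _; apply: psd_diag.
Qed.

Lemma tracenorm_ge0 (I J : finType) (Y : op R I J) : 0 <= tracenorm Y.
Proof.
by have [h _] := msqrt_spec (psd_adjmul Y); apply: trop_ge0.
Qed.

Lemma tracenorm_entry (I : finType) (Y : op R I I) p :
  (Y p p)^* * Y p p <= tracenorm Y * tracenorm Y.
Proof.
have [hS eS] := msqrt_spec (psd_adjmul Y).
rewrite /tracenorm; set S := msqrt _ in hS eS *.
have e1 : (Y p p)^* * Y p p <= mulop (adjop Y) Y p p.
  rewrite /mulop /adjop (bigD1 p) //= lerDl.
  by apply: sumr_ge0 => k _; rewrite mulrC mul_conjC_ge0.
apply: le_trans e1 _; rewrite -eS /mulop.
apply: (@le_trans _ _ (\sum_q S p p * S q q)).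
  by apply: ler_sum => q _; apply: psd_minor.
rewrite -mulr_sumr; apply: ler_wpM2r; first by apply: trop_ge0.
exact: diag_le_trop.
Qed.

Definition proj1 (I : finType) (t : I) : op R I I :=
  fun p q => ((p == t) && (q == t))%:R.

Lemma psd_zero_row (I : finType) (S : op R I I) p :
  psd S -> mulop S S p p = 0 -> forall q, S p q = 0.
Proof.
move=> hS; rewrite /mulop => h0 q.
have e : forall r, S p r * S r p = S p r * (S p r)^*.
  by move=> r; rewrite (psd_herm p r hS) conjCK mulrC.
have h0' : \sum_r S p r * (S p r)^* = 0.
  by rewrite -[RHS]h0; apply: eq_bigr => r _; rewrite e.
have /psumr_eq0P h := h0'.
have : S p q * (S p q)^* == 0 by rewrite h // => r _; apply: mul_conjC_ge0.
by rewrite mulf_eq0 conjC_eq0 orbb => /eqP.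
Qed.

Lemma tracenorm_proj1 (I : finType) (t : I) : tracenorm (proj1 t) <= 1.
Proof.
have [hS eS] := msqrt_spec (psd_adjmul (proj1 t)).
rewrite /tracenorm; set S := msqrt _ in hS eS *.
have eE : forall p q, mulop (adjop (proj1 t)) (proj1 t) p q = ((p == t) && (q == t))%:R.
  move=> p q; rewrite /mulop /adjop /proj1 (bigD1 t) //= eqxx /= big1 ?addr0.
    by rewrite rmorph_nat -natrM mulnb.
  by move=> k /negbTE ->; rewrite /= rmorph0 mul0r.
have z1 : forall p q, p != t -> S p q = 0.
  move=> p q hp; apply: (psd_zero_row hS); rewrite eS eE.
  by rewrite (negbTE hp).
have z2 : forall p q, q != t -> S p q = 0.
  by move=> p q hq; rewrite (psd_herm p q hS) z1 ?rmorph0.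
have ett : S t t * S t t = 1.
  have := eE t t; rewrite -eS /mulop (bigD1 t) //= big1 ?addr0 ?eqxx //.
  by move=> k hk; rewrite z2 // mul0r.
have htt : S t t = 1.
  have h0 := psd_diag t hS.
  have : (S t t - 1) * (S t t + 1) == 0.
    by rewrite mulrDr mulr1 mulrBl ett mul1r addrA subrK subrr.
  rewrite mulf_eq0 => /orP [/eqP h|/eqP h].
    by apply/eqP; rewrite -subr_eq0 h.
  have : S t t = -1 by apply/eqP; rewrite -addr_eq0; apply/eqP.
  move=> e; move: h0; rewrite e oppr_ge0 => h1.
  by have := lt_le_trans ltr01 h1; rewrite ltxx.
rewrite /trop (bigD1 t) //= big1 ?addr0 ?htt //.
by move=> k hk; rewrite z1.
Qed.

End H.

Section H.
Variable R : realType.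
Local Notation C := (R[i]).

Lemma psd_diagm (I : finType) (d : I -> C) :
  (forall i, 0 <= d i) -> psd (fun i j => (i == j)%:R * d i).
Proof.
move=> hd; split.
  move=> i j; have [->|nij] := eqVneq i j.
    by rewrite mul1r conj_nneg.
  by rewrite !mul0r rmorph0.
move=> v; apply: sumr_ge0 => i _.
rewrite (_ : \sum_j _ = (v i)^* * d i * v i).
  rewrite (_ : (v i)^* * d i * v i = d i * (v i * (v i)^*)); last by ring.
  by apply: mulr_ge0 => //; apply: mul_conjC_ge0.
rewrite -(sum_dl i (fun j => (v i)^* * d i * v j)); apply: eq_bigr => j _; ring.
Qed.

Lemma psd_sqrt_scalar (I : finType) (s : op R I I) (r : C) :
  psd s -> (forall i j, mulop s s i j = (i == j)%:R * (r * r)) -> 0 < r ->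
  forall i j, s i j = (i == j)%:R * r.
Proof.
move=> hs hss r0.
have r00 : 0 <= r by apply: ltW.
pose M i j := s i j - (i == j)%:R * r.
have hb : forall j k, \sum_l (s j l + (j == l)%:R * r) * M l k = 0.
  move=> j k.
  have -> : \sum_l (s j l + (j == l)%:R * r) * M l k =
     \sum_l (s j l * s l k) - \sum_l (s j l * ((l == k)%:R * r)) +
     \sum_l ((j == l)%:R * (r * s l k)) - \sum_l ((j == l)%:R * ((l == k)%:R * r * r)).
    rewrite -sumrB -big_split -sumrB /=; apply: eq_bigr => l _; rewrite /M; ring.
  rewrite sum_dl sum_dl (_ : \sum_l s j l * ((l == k)%:R * r) = s j k * r).
    by rewrite -/(mulop s s j k) hss; ring.
  rewrite -(sum_dr' k (fun l => s j l * r)); apply: eq_bigr => l _; ring.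
move=> i0 j0; apply/eqP; rewrite -subr_eq0; apply/eqP; rewrite -/(M i0 j0).
suff : forall k j, M j k = 0 by move=> h; apply: h.
move=> k.
have hc : \sum_j (M j k)^* * (\sum_l s j l * M l k) + r * \sum_j (M j k)^* * M j k = 0.
  rewrite (_ : _ + _ = \sum_j (M j k)^* * \sum_l (s j l + (j == l)%:R * r) * M l k).
    by rewrite big1 // => j _; rewrite hb mulr0.
  rewrite mulr_sumr -big_split /=; apply: eq_bigr => j _.
  under [X in _ = _ * X]eq_bigr => l _ do rewrite mulrDl.
  rewrite big_split /= (_ : \sum_l (j == l)%:R * r * M l k = r * M j k); first by ring.
  by rewrite -(sum_dl j (fun l => r * M l k)); apply: eq_bigr => l _; ring.
have F0 : 0 <= \sum_j (M j k)^* * (\sum_l s j l * M l k).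
  have := psd_form (fun l => M l k) hs.
  by under eq_bigr => j _ do (rewrite -/(M j k); under eq_bigr => l _ do rewrite -mulrA;
       rewrite -mulr_sumr).
have G0 : 0 <= \sum_j (M j k)^* * M j k.
  by apply: sumr_ge0 => j _; rewrite mulrC mul_conjC_ge0.
have rG : r * \sum_j (M j k)^* * M j k = 0.
  apply/eqP; rewrite eq_le mulr_ge0 // andbT.
  rewrite (_ : r * _ = - \sum_j (M j k)^* * (\sum_l s j l * M l k)) ?oppr_le0 //.
  by apply/eqP; rewrite -addr_eq0 addrC hc.
move: rG => /eqP; rewrite mulf_eq0 (gt_eqF r0) /= => /eqP /psumr_eq0P h j.
have : (M j k)^* * M j k == 0.
  by rewrite h // => l _; rewrite mulrC mul_conjC_ge0.
by rewrite mulf_eq0 conjC_eq0 orbb => /eqP.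
Qed.

End H.

Section H.
Variable R : realType.
Local Notation C := (R[i]).
Variable N : nat.
Variable istar : 'I_N.
Local Notation f := (fsearch istar).

Lemma natT : (true%:R : C) = 1. Proof. by []. Qed.
Lemma natF : (false%:R : C) = 0. Proof. by []. Qed.

Lemma Viso_E p i : Viso R istar p i = ((i, f i) == p)%:R.
Proof.
case: p => a b; rewrite /Viso /Uorc /= xpair_eqE.
by rewrite (eq_sym a) (eq_sym b).
Qed.

Lemma Viso_E2 k b p : Viso R istar (k, b) p = (k == p)%:R * (b == f k)%:R.
Proof.
rewrite /Viso /Uorc /=; have [->|nkp] := eqVneq k p.
  by rewrite mul1r.
by rewrite mul0r.
Qed.

Lemma chanNadj_E (Y : op R bool bool) i j :
  chanNadj istar Y i j = (i == j)%:R * Y (f i) (f i).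
Proof.
rewrite /chanNadj /mulop /adjop.
under eq_bigr => p _ do rewrite Viso_E rmorph_nat.
rewrite sum_dl.
under eq_bigr => q _ do rewrite Viso_E.
rewrite sum_dr /tensop /idop /=.
by have [->|nij] := eqVneq i j; rewrite ?mul0r.
Qed.

Lemma chanN_sigma_E b b' :
  chanN istar (sigmaA R (N:=N)) b b' =
  (b == b')%:R * ((\sum_k (f k == b)%:R) * (N%:R)^-1).
Proof.
rewrite /chanN /ptr1 /mulop /adjop.
rewrite mulr_suml mulr_sumr; apply: eq_bigr => k _.
under eq_bigr => p _ do rewrite Viso_E2.
rewrite (_ : \sum_p _ = (b == f k)%:R * \sum_q sigmaA R k q * (Viso R istar (k, b') q)^*); last first.
  rewrite -(sum_dl k (fun p => (b == f k)%:R * \sum_q sigmaA R p q * (Viso R istar (k, b') q)^*)).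
  by apply: eq_bigr => p _; rewrite mulrA.
under eq_bigr => q _ do rewrite Viso_E2 rmorphM /= !rmorph_nat.
rewrite (_ : \sum_q _ = (N%:R)^-1 * (b' == f k)%:R); last first.
  rewrite -(sum_dl k (fun q => (N%:R)^-1 * (b' == f k)%:R)).
  apply: eq_bigr => q _; rewrite /sigmaA.
  have [->|nkq] := eqVneq k q; rewrite ?natT ?natF; ring.
by case: b; case: b'; case: (f k); rewrite /= ?mul1r ?mul0r ?mulr1 ?mulr0.
Qed.

Definition ddN (b : bool) : C := (\sum_k (f k == b)%:R) * (N%:R)^-1.

Lemma ddN_ge0 b : 0 <= ddN b.
Proof.
by rewrite /ddN mulr_ge0 ?invr_ge0 ?ler0n // sumr_ge0 // => k _; rewrite ler0n.
Qed.

Lemma chanN_sigma_diag :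
  chanN istar (sigmaA R (N:=N)) = fun b b' => (b == b')%:R * ddN b.
Proof.
by apply: functional_extensionality => b; apply: functional_extensionality => b';
  rewrite chanN_sigma_E.
Qed.

Lemma psd_D : psd (chanN istar (sigmaA R (N:=N))).
Proof. rewrite chanN_sigma_diag; apply: psd_diagm; exact: ddN_ge0. Qed.

Lemma ddN_true : ddN true = (N%:R)^-1.
Proof.
rewrite /ddN (_ : \sum_k _ = 1) ?mul1r //.
rewrite -[RHS](sum_dr' istar (fun _ => 1)); apply: eq_bigr => k _.
by rewrite /fsearch mul1r eqb_id.
Qed.

Hypothesis hN : (2 <= N)%N.

Lemma ddN_false : ddN false != 0.
Proof.
rewrite /ddN mulf_eq0 invr_eq0 pnatr_eq0 negb_or.
have hN0 : N != 0%N by case: N hN.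
rewrite hN0 andbT.
have h0 : (0 < N)%N by case: N hN.
have h1 : (1 < N)%N by [].
pose k0 : 'I_N := if istar == Ordinal h0 then Ordinal h1 else Ordinal h0.
have hk0 : f k0 = false.
  rewrite /fsearch /k0; have [e|ne] := eqVneq istar (Ordinal h0).
    by rewrite e.
  by apply/negbTE; rewrite eq_sym.
apply: lt0r_neq0.
rewrite (bigD1 k0) //= hk0 eqxx.
apply: (@lt_le_trans _ _ 1); first by apply: ltr01.
by rewrite lerDl sumr_ge0 // => k _; rewrite ler0n.
Qed.

End H.

Section H.
Variable R : realType.
Local Notation C := (R[i]).
Variable N : nat.
Variable istar : 'I_N.
Hypothesis hN : (2 <= N)%N.
Local Notation f := (fsearch istar).

Local Notation mm := (msqrt (chanN istar (sigmaA R (N:=N)))).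

Let mspec := msqrt_spec (psd_D R istar).

Let mE b b' : mm b true * mm true b' + mm b false * mm false b' = (b == b')%:R * ddN R istar b.
Proof.
have [_ e] := mspec; rewrite -chanN_sigma_E.
by have := f_equal (fun X => X b b') e; rewrite /mulop big_bool /= => <-.
Qed.

Lemma m_tf : mm true false = 0.
Proof.
have [hm _] := mspec.
have := mE true false; rewrite mulr0n mul0r.
have -> : mm true true * mm true false + mm true false * mm false false =
  mm true false * (mm true true + mm false false) by ring.
move/eqP; rewrite mulf_eq0 => /orP [/eqP //|].
rewrite paddr_eq0 ?psd_diag // => /andP [/eqP h1 /eqP h2].
have := psd_minor true false hm; rewrite h1 h2 mulr0 (psd_herm false true hm) => h.
have : mm true false * (mm true false)^* == 0.
  by rewrite eq_le h mul_conjC_ge0.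
by rewrite mulf_eq0 conjC_eq0 orbb => /eqP.
Qed.

Lemma m_ft : mm false true = 0.
Proof. have [hm _] := mspec; by rewrite (psd_herm false true hm) m_tf rmorph0. Qed.

Lemma m_tt2 : mm true true * mm true true = (N%:R)^-1.
Proof.
have := mE true true; rewrite m_tf mul0r addr0 ddN_true.
by rewrite mulr1n mul1r.
Qed.

Lemma m_ff_neq0 : mm false false != 0.
Proof.
have := mE false false; rewrite m_tf mulr0 add0r mulr1n mul1r => e.
apply/eqP => h; move: (ddN_false R istar hN); rewrite -e h mul0r eqxx.
by [].
Qed.

Lemma m_tt_neq0 : mm true true != 0.
Proof.
apply/eqP => h; have := m_tt2; rewrite h mul0r => /esym/eqP.
by rewrite invr_eq0 pnatr_eq0; case: N hN.
Qed.

Local Notation nn := (minv mm).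

Lemma n_spec : mulop mm nn = @idop R bool /\ mulop nn mm = @idop R bool.
Proof.
apply: (@minv_spec R bool mm (fun b b' => (b == b')%:R * (mm b b)^-1)).
split; apply: functional_extensionality => b; apply: functional_extensionality => b';
  rewrite /mulop big_bool /idop /=;
  case: b; case: b'; rewrite /= ?m_tf ?m_ft ?mulr0n ?mulr1n ?mul0r ?mulr0 ?mul1r ?addr0 ?add0r //.
- by rewrite mulfV // m_tt_neq0.
- by rewrite mulfV // m_ff_neq0.
- by rewrite mulVf // m_tt_neq0.
- by rewrite mulVf // m_ff_neq0.
Qed.

Lemma n_tt2 : nn true true * nn true true = N%:R.
Proof.
have [_ e] := n_spec.
have := f_equal (fun X => X true true) e; rewrite /mulop big_bool /idop /= m_ft mulr0 addr0 mulr1n.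
move=> h.
have hN0 : (N%:R : C) != 0 by rewrite pnatr_eq0; case: N hN.
have : nn true true * nn true true * (mm true true * mm true true) = 1.
  rewrite (_ : nn true true * nn true true * (mm true true * mm true true) =
    (nn true true * mm true true) * (nn true true * mm true true)); last by ring.
  by rewrite h mulr1.
rewrite m_tt2 => h2.
by apply: (mulIf (invr_neq0 hN0)); rewrite h2 mulfV.
Qed.

Lemma mul_scalar (I : finType) (s G : op R I I) r :
  (forall i j, s i j = (i == j)%:R * r) ->
  forall i i', mulop s (mulop G s) i i' = r * G i i' * r.
Proof.
move=> hs i i'; rewrite /mulop.
under eq_bigr => j _ do (rewrite hs; under eq_bigr => k _ do rewrite hs).
rewrite (_ : \sum_j _ = \sum_j (i == j)%:R * (r * (G j i' * r))).
  by rewrite sum_dl mulrA.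
apply: eq_bigr => j _.
rewrite (_ : \sum_k _ = G j i' * r); first by ring.
rewrite -(sum_dr' i' (fun k => G j k * r)); apply: eq_bigr => k _; ring.
Qed.

Lemma s_scalar i j :
  msqrt (sigmaA R (N:=N)) i j = (i == j)%:R * sqrtC ((N%:R)^-1).
Proof.
have hs : psd (sigmaA R (N:=N)).
  have hd : forall _ : 'I_N, 0 <= (N%:R : C)^-1 by move=> _; rewrite invr_ge0 ler0n.
  exact: (psd_diagm hd).
have [h e] := msqrt_spec hs.
apply: (psd_sqrt_scalar h).
  by move=> a b; rewrite e /sigmaA -expr2 sqrtCK.
by rewrite sqrtC_gt0 invr_gt0 ltr0n; case: N hN.
Qed.

Lemma petz_one : petzN istar (proj1 R true) istar istar = 1.
Proof.
rewrite /petzN /petz /= (mul_scalar _ s_scalar) chanNadj_E eqxx mulr1n mul1r.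
rewrite /fsearch eqxx.
rewrite (_ : mulop nn (mulop (proj1 R true) nn) true true = nn true true * nn true true).
  rewrite (_ : forall a b : C, a * b * a = (a * a) * b); last by move=> a b; ring.
  rewrite -expr2 sqrtCK n_tt2 mulVf // pnatr_eq0; by case: N hN.
by rewrite /mulop !big_bool /proj1 /=; ring.
Qed.

End H.

Section H.
Variable R : realType.
Local Notation C := (R[i]).

Definition nrm2 (I : finType) (x : I -> C) := \sum_s x s * (x s)^*.
Definition ipr (I : finType) (x y : I -> C) := \sum_s x s * (y s)^*.
Definition mv (I J : finType) (M : op R I J) (x : J -> C) : I -> C :=
  fun s => \sum_t M s t * x t.
Definition vsub (I : finType) (x y : I -> C) : I -> C := fun s => x s - y s.
Definition vadd (I : finType) (x y : I -> C) : I -> C := fun s => x s + y s.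

Lemma nrm2_ge0 (I : finType) (x : I -> C) : 0 <= nrm2 x.
Proof. by apply: sumr_ge0 => s _; apply: mul_conjC_ge0. Qed.

Lemma iso_nrm (I J : finType) (V : op R I J) (x : J -> C) :
  mulop (adjop V) V = @idop R J -> nrm2 (mv V x) = nrm2 x.
Proof.
move=> hV.
have key : forall t u, \sum_s V s t * (V s u)^* = (u == t)%:R.
  move=> t u; have := f_equal (fun X => X u t) hV; rewrite /mulop /adjop /idop /= => <-.
  by apply: eq_bigr => s _; rewrite mulrC.
rewrite /nrm2 /mv.
transitivity (\sum_t \sum_u x t * (x u)^* * \sum_s V s t * (V s u)^*).
  under eq_bigr => s _ do rewrite rmorph_sum mulr_suml.
  rewrite exchange_big /=; apply: eq_bigr => t _.
  under eq_bigr => s _ do rewrite mulr_sumr.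
  rewrite exchange_big /=; apply: eq_bigr => u _.
  rewrite mulr_sumr; apply: eq_bigr => s _; rewrite rmorphM /=; ring.
apply: eq_bigr => t _; under eq_bigr => u _ do rewrite key.
by rewrite sum_dr'.
Qed.

Lemma mv_sub (I J : finType) (M : op R I J) (x y : J -> C) :
  vsub (mv M x) (mv M y) = mv M (vsub x y).
Proof.
apply: functional_extensionality => s; rewrite /vsub /mv -sumrB.
by apply: eq_bigr => t _; rewrite mulrBr.
Qed.

Lemma nrm2_add_le (I : finType) (a b : I -> C) (t : C) : 0 <= t ->
  t * nrm2 (vadd a b) <= (t + 1) * nrm2 a + t * (t + 1) * nrm2 b.
Proof.
move=> t0.
have h1 : nrm2 (vadd a b) = nrm2 a + nrm2 b + (ipr a b + ipr b a).
  rewrite /nrm2 /ipr /vadd -!big_split /=; apply: eq_bigr => s _.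
  rewrite rmorphD /=; ring.
have h2 : nrm2 (fun s => a s - t * b s) =
    nrm2 a - t * (ipr a b + ipr b a) + t * t * nrm2 b.
  rewrite /nrm2 /ipr -big_split /= mulr_sumr mulr_sumr -sumrB -big_split /=.
  apply: eq_bigr => s _; rewrite rmorphB rmorphM /= (geC0_conj t0); ring.
have := nrm2_ge0 (fun s => a s - t * b s); rewrite h2 h1 => h.
rewrite -subr_ge0.
rewrite (_ : _ - _ = nrm2 a - t * (ipr a b + ipr b a) + t * t * nrm2 b) //; ring.
Qed.

Lemma sqr_sub_le (a b : C) :
  (a - b) * (a - b)^* <= 2 * (a * a^*) + 2 * (b * b^*).
Proof.
rewrite -subr_ge0.
rewrite (_ : _ - _ = (a + b) * (a + b)^*); first exact: mul_conjC_ge0.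
rewrite !rmorphD /= !rmorphN /=; ring.
Qed.

Lemma sqr_lb (a b : C) :
  a * a^* - 2 * (b * b^*) <= 2 * ((a - b) * (a - b)^*).
Proof.
rewrite -subr_ge0.
rewrite (_ : _ - _ = (a - 2 * b) * (a - 2 * b)^*); first exact: mul_conjC_ge0.
rewrite !rmorphD /= !rmorphN /= !rmorphM /= rmorph_nat; ring.
Qed.

End H.

Section H.
Variable R : realType.
Local Notation C := (R[i]).
Variable N : nat.
Variable istar : 'I_N.

Definition gq (p : bool * 'I_N) : bool * 'I_N := (addb p.1 (p.2 == istar), p.2).

Lemma swap_E (p : bool * 'I_N) (e : 'I_N * bool) :
  swapop R p e = (e == (p.2, p.1))%:R.
Proof.
case: p => b j; case: e => k c; rewrite /swapop /= xpair_eqE.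
by rewrite (eq_sym b) (eq_sym j) andbC.
Qed.

Lemma Uorc_E (e : 'I_N * bool) (q : bool * 'I_N) :
  Uorc R istar e q = (q == gq (e.2, e.1) )%:R * 1.
Proof.
case: e => k c; case: q => b j; rewrite /Uorc /gq /fsearch /= xpair_eqE mulr1.
have [->|nkj] := eqVneq j k; last by rewrite andbF.
by rewrite andbT /=; case: b; case: c; case: (k == istar).
Qed.

Lemma query_E inv (p q : bool * 'I_N) :
  query R istar inv p q = (q == gq p)%:R.
Proof.
case: inv; rewrite /query /mulop /adjop.
  under eq_bigr => e _ do rewrite Uorc_E mulr1 (swap_E q) !rmorph_nat.
  rewrite sum_dr' /=.
  case: p => b j; case: q => b' j'; rewrite /gq /= !xpair_eqE.
  have [->|njj] := eqVneq j' j; last by rewrite ?andbF ?andFb.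
  by rewrite !andbT; case: b; case: b'; case: (j == istar).
under eq_bigr => e _ do rewrite swap_E Uorc_E mulr1.
by rewrite sum_dl' /=; case: p.
Qed.

Definition gs (W : finType) (s : (bool * 'I_N) * W) := (gq s.1, s.2).

Lemma gq_inv p : gq (gq p) = p.
Proof. by case: p => b j; rewrite /gq /= -addbA addbb addbF. Qed.

Lemma gs_inj (W : finType) : injective (@gs W).
Proof.
have gs_inv : forall s : (bool * 'I_N) * W, gs (gs s) = s.
  by move=> [s1 s2]; rewrite /gs /= gq_inv.
exact: (can_inj gs_inv).
Qed.

Lemma query_act (W : finType) inv (x : ((bool * 'I_N) * W) -> C) :
  mv (tensop (query R istar inv) (@idop R W)) x = fun s => x (gs s).
Proof.
apply: functional_extensionality => s; rewrite /mv /tensop.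
rewrite -(sum_dl' (gs s) x); apply: eq_bigr => t _.
rewrite query_E /idop; congr (_ * _).
case: t => t1 t2; case: s => s1 s2; rewrite /gs /= xpair_eqE -natrM mulnb.
by rewrite (eq_sym s2).
Qed.

Lemma nrm2_perm (W : finType) (x : ((bool * 'I_N) * W) -> C) :
  nrm2 (fun s => x (gs s)) = nrm2 x.
Proof.
by rewrite /nrm2 [in RHS](reindex_inj (@gs_inj W)).
Qed.

Definition Pi (W : finType) (x : ((bool * 'I_N) * W) -> C) :=
  \sum_s (s.1.2 == istar)%:R * (x s * (x s)^*).

Lemma Pi_perm (W : finType) (x : ((bool * 'I_N) * W) -> C) :
  Pi (fun s => x (gs s)) = Pi x.
Proof.
rewrite /Pi [in RHS](reindex_inj (@gs_inj W)); apply: eq_bigr => s _.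
by case: s => [[b j] w].
Qed.

Lemma err_le (W : finType) (x : ((bool * 'I_N) * W) -> C) :
  nrm2 (vsub (fun s => x (gs s)) x) <= 4 * Pi x.
Proof.
apply: (@le_trans _ _ (\sum_s (s.1.2 == istar)%:R * (2 * (x (gs s) * (x (gs s))^*) + 2 * (x s * (x s)^*)))).
  apply: ler_sum => s _; rewrite /vsub.
  case: s => [[b j] w] /=; have [->|nj] := eqVneq j istar.
    by rewrite mul1r; apply: sqr_sub_le.
  by rewrite mul0r /gs /gq /= (negbTE nj) addbF subrr mul0r.
rewrite (_ : \sum_s _ = 2 * Pi (fun s => x (gs s)) + 2 * Pi x).
  by rewrite Pi_perm (_ : 2 * Pi x + 2 * Pi x = 4 * Pi x) ?lexx //; ring.
rewrite /Pi !mulr_sumr -big_split /=; apply: eq_bigr => s _; ring.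
Qed.

Lemma sum_Pi (W : finType) (x : ((bool * 'I_N) * W) -> C) :
  \sum_(i : 'I_N) (\sum_s (s.1.2 == i)%:R * (x s * (x s)^*)) = nrm2 x.
Proof.
rewrite exchange_big /=; apply: eq_bigr => s _.
exact: (sum_dl s.1.2 (fun _ => x s * (x s)^*)).
Qed.

End H.

Section H.
Variable R : realType.
Local Notation C := (R[i]).
Variable N : nat.
Variable Q : qalg R N.
Hypothesis hQ : qalg_valid Q.
Local Notation S := ((bool * 'I_N) * qW Q)%type.
Local Notation T := (qT Q).

Definition psi (i : 'I_N) k : S -> C := fun s => qstate Q i k s true.
Fixpoint phi k : S -> C :=
  match k with
  | 0 => fun s => qVin Q s true
  | k'.+1 => mv (qVmid Q k') (phi k')
  end.

Lemma psi_S i k : psi i k.+1 = mv (qVmid Q k) (fun s => psi i k (gs i s)).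
Proof. by rewrite -(query_act i (qinv Q k) (psi i k)). Qed.

Lemma nrm2_phi k : (k <= T)%N -> nrm2 (phi k) = 1.
Proof.
have [hin [hmid _]] := hQ.
elim: k => [_|k IH hk] /=.
  have := f_equal (fun X => X true true) hin; rewrite /mulop /adjop /idop /= => e.
  by rewrite /nrm2 -[RHS]e; apply: eq_bigr => s _; rewrite mulrC.
have [hu _] := hmid k hk.
by rewrite iso_nrm // IH // ltnW.
Qed.

Lemma nrm2_vsubxx (x : S -> C) : nrm2 (vsub x x) = 0.
Proof. by rewrite /nrm2 /vsub big1 // => s _; rewrite subrr mul0r. Qed.

Definition Dk i k := nrm2 (vsub (psi i k) (phi k)).

Lemma hybrid i k : (k <= T)%N ->
  Dk i k <= k%:R * \sum_(j < k) 4 * Pi i (phi j).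
Proof.
have [hin [hmid _]] := hQ.
elim: k => [_|k IH hk].
  by rewrite /Dk /psi /= nrm2_vsubxx mul0r.
have hkT : (k < T)%N by [].
have [hu _] := hmid k hkT.
have IH' := IH (ltnW hk).
rewrite /Dk psi_S /= mv_sub iso_nrm //.
set a : S -> C := fun s => vsub (psi i k) (phi k) (gs i s).
set b : S -> C := vsub (fun s => phi k (gs i s)) (phi k).
have eab : vsub (fun s => psi i k (gs i s)) (phi k) = vadd a b.
  apply: functional_extensionality => s; rewrite /vadd /a /b /vsub; ring.
have na : nrm2 a = Dk i k by rewrite /a nrm2_perm.
have nb : nrm2 b <= 4 * Pi i (phi k) by apply: err_le.
rewrite eab big_ord_recr /=.
have nb0 : 0 <= nrm2 b by apply: nrm2_ge0.
have [k0|kn0] := eqVneq k 0%N.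
  subst k.
  have -> : vadd a b = b.
    by apply: functional_extensionality => s; rewrite /vadd /a /vsub /psi /= subrr add0r.
  by rewrite mul1r big_ord0 add0r.
set Sk := \sum_(j < k) _ in IH' *.
have kpos : 0 < k%:R :> C by rewrite ltr0n lt0n.
rewrite -(ler_pM2l kpos).
apply: (le_trans (nrm2_add_le a b (ltW kpos))).
rewrite na.
have e : k%:R * ((k.+1)%:R * (Sk + 4 * Pi i (phi k))) =
  (k%:R + 1) * (k%:R * Sk) + k%:R * (k%:R + 1) * (4 * Pi i (phi k)).
  by rewrite -addn1 natrD; ring.
rewrite e; apply: lerD.
  by apply: ler_wpM2l => //; rewrite addr_ge0 // ltW.
by apply: ler_wpM2l => //; rewrite mulr_ge0 // ?addr_ge0 // ltW.
Qed.

Lemma sum_D : \sum_i Dk i T <= T%:R * (T%:R * 4).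
Proof.
apply: (le_trans (ler_sum _ (fun i _ => hybrid i (leqnn T)))).
rewrite -mulr_sumr exchange_big /=.
rewrite (_ : \sum_j _ = \sum_(j < T) (4 : C)).
  by rewrite sumr_const card_ord (mulrC _ 4) (mulr_natr 4 T).
apply: eq_bigr => j _; rewrite -mulr_sumr /Pi sum_Pi nrm2_phi ?mulr1 //.
exact: ltnW (ltn_ord j).
Qed.

Definition uu i := mv (qVout Q) (psi i T).
Definition u0 := mv (qVout Q) (phi T).
Definition succ i := \sum_o uu i (i, o) * (uu i (i, o))^*.
Definition pp i := \sum_o u0 (i, o) * (u0 (i, o))^*.

Lemma sum_pair (I J : finType) (F : (I * J)%type -> C) :
  \sum_p F p = \sum_i \sum_j F (i, j).
Proof. by rewrite pair_big /=; apply: eq_bigr => [[i j]] _. Qed.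

Lemma D_eq i : Dk i T = nrm2 (vsub (uu i) u0).
Proof.
have [_ [_ hout]] := hQ.
by rewrite /uu /u0 mv_sub iso_nrm.
Qed.

Lemma lower i : succ i - 2 * pp i <= 2 * Dk i T.
Proof.
rewrite D_eq /succ /pp mulr_sumr -sumrB.
apply: (@le_trans _ _ (2 * \sum_o (vsub (uu i) u0 (i, o)) * (vsub (uu i) u0 (i, o))^*)).
  rewrite mulr_sumr; apply: ler_sum => o _; exact: sqr_lb.
apply: ler_wpM2l => //.
rewrite /nrm2 sum_pair (bigD1 i) //= lerDl.
by apply: sumr_ge0 => j _; apply: sumr_ge0 => o _; apply: mul_conjC_ge0.
Qed.

Lemma final_bound (c0 : C) : (forall i, c0 <= succ i) ->
  N%:R * c0 - 2 <= 2 * (T%:R * (T%:R * 4)).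
Proof.
move=> hc.
have hp : \sum_i pp i = 1.
  rewrite /pp -(nrm2_phi (leqnn T)).
  have [_ [_ hout]] := hQ.
  by rewrite -(iso_nrm (phi T) hout) -/u0 /nrm2 sum_pair.
apply: (@le_trans _ _ (\sum_i (succ i - 2 * pp i))).
  rewrite sumrB -mulr_sumr hp mulr1 lerD2r.
  have -> : N%:R * c0 = \sum_(i < N) c0 by rewrite sumr_const card_ord mulr_natl.
  by apply: ler_sum.
apply: (le_trans (ler_sum _ (fun i _ => lower i))).
by rewrite -mulr_sumr ler_wpM2l // sum_D.
Qed.

End H.

Section H.
Variable R : realType.
Local Notation C := (R[i]).
Variable N : nat.
Hypothesis hN : (2 <= N)%N.
Variable Q : qalg R N.

Lemma omega_E : (fun i i' => proj1 R (true, tt) (i, tt) (i', tt)) = proj1 R true.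
Proof.
apply: functional_extensionality => i; apply: functional_extensionality => i'.
by rewrite /proj1 !xpair_eqE !andbT.
Qed.

Lemma qchannel_E istar : qchannel Q istar (proj1 R true) istar istar = succ Q istar.
Proof.
rewrite /qchannel /ptr2 /succ; apply: eq_bigr => o _.
rewrite /mulop big_bool /= !big_bool /proj1 /= !mulr0n !mulr1n !mul0r ?addr0 ?mul1r ?mulr0 ?addr0.
by [].
Qed.

Lemma succ_ge0 istar : 0 <= succ Q istar.
Proof. by apply: sumr_ge0 => o _; apply: mul_conjC_ge0. Qed.

Lemma success (c : R) istar : 0 <= c ->
  diamond_le (supop_sub (qchannel Q istar) (petzN istar)) c ->
  (1 - c)%:C%C <= succ Q istar.
Proof.
move=> c0 hd.
have h := hd unit (proj1 R (true, tt)) (tracenorm_proj1 R (true, tt)).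
have h2 := tracenorm_entry (tensid (supop_sub (qchannel Q istar) (petzN istar)) (proj1 R (true, tt))) (istar, tt).
set tn := tracenorm _ in h h2.
have tn0 : 0 <= tn by apply: tracenorm_ge0.
have h3 : tn * tn <= c%:C%C * c%:C%C.
  by apply: (le_trans (ler_wpM2l tn0 h)); apply: ler_wpM2r => //; rewrite lecR.
have h4 := le_trans h2 h3.
move: h4; rewrite /tensid /supop_sub /= omega_E qchannel_E (petz_one R istar hN).
have /RRe_real ers : succ Q istar \is Num.real by apply: ger0_real; apply: succ_ge0.
rewrite -ers.
rewrite -(rmorph1 (real_complex R)) -rmorphB /=.
set r := complex.Re (succ Q istar).
have rr : (r - 1)%:C%C \is Num.real by apply/complex_realP; exists (r - 1).
rewrite (conj_Creal rr) -!rmorphM /= lecR => h5.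
rewrite lecR; nra.
Qed.

End H.

Unset Implicit Arguments.
Set Strict Implicit.

Theorem mainTheorem5 (R : realType) (c : R) :
  0 <= c -> c < 1 ->
  exists (K : R) (N0 : nat), 0 < K /\
    forall (N : nat), (2 <= N)%N -> (N0 <= N)%N ->
    forall Q : qalg R N, qalg_valid Q ->
      (forall istar : 'I_N,
         diamond_le (supop_sub (qchannel Q istar) (petzN istar)) c) ->
      K * Num.sqrt (N%:R : R) <= (qT Q)%:R.
Proof.
move=> c0 c1.
have s0pos : 0 < 1 - c by rewrite subr_gt0.
exists (Num.sqrt (1 - c) / 4), (Num.bound (4 / (1 - c))).
split; first by rewrite divr_gt0 // sqrtr_gt0.
move=> N hN hN0 Q hQ hd.
have hsucc : forall i, (1 - c)%:C%C <= succ Q i.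
  by move=> i; exact: (success hN c0 (hd i)).
have hb := final_bound hQ hsucc.
set T := qT Q in hb *.
have hbR : (N%:R * (1 - c) - 2 <= 2 * (T%:R * (T%:R * 4)) :> R).
  have e1 : (N%:R * (1 - c) - 2 : R)%:C%C = N%:R * (1 - c)%:C%C - 2.
    by rewrite rmorphB rmorphM /= !rmorph_nat.
  have e2 : (2 * (T%:R * (T%:R * 4)) : R)%:C%C = 2 * (T%:R * (T%:R * 4)).
    by rewrite !rmorphM /= !rmorph_nat.
  by rewrite -lecR e1 e2.
have hb4 : 4 / (1 - c) < N%:R.
  apply: (lt_le_trans (archi_boundP _)); first by rewrite divr_ge0 // ltW.
  by rewrite ler_nat.
have hN4 : 4 < N%:R * (1 - c).
  by rewrite -ltr_pdivrMr.
have hsN : 0 <= N%:R :> R by rewrite ler0n.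
rewrite -ler_sqr ?nnegrE ?mulr_ge0 ?divr_ge0 ?sqrtr_ge0 ?ler0n //.
rewrite exprMn exprMn !sqr_sqrtr // ?ltW //.
nra.
by rewrite invr_ge0 ler0n.
Qed.
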